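(* For every permutation $\beta$, the set of properties $\{\operatorname{Av}(\delta) : \delta\le\beta\}$ is query-complete.
   Context: A permutation $\pi$ contains $\sigma$ (written $\sigma\le\pi$) if $\pi$ has a subsequence order-isomorphic to $\sigma$; $\operatorname{Av}(\delta)$ is the set of permutations not containing $\delta$. For $\sigma\in S_m$ and nonempty permutations $\alpha_1,\dots,\alpha_m$, the inflation $\sigma[\alpha_1,\dots,\alpha_m]$ is the permutation obtained by replacing each entry $\sigma(i)$ by an interval (contiguous positions, consecutive values) order-isomorphic to $\alpha_i$. A property is any set of permutations. A set $\mathcal{P}$ of properties is query-complete if for every permutation $\sigma\in S_m$ and every $P\in\mathcal{P}$, whether $\sigma[\alpha_1,\dots,\alpha_m]\in P$ is determined by $\sigma$ together with the knowledge, for each $i\in[m]$ and each $Q\in\mathcal{P}$, of whether $\alpha_i\in Q$. *)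

(* Defs.v *)
(* Permutations are in one-line notation on values 0..n-1. *)
From mathcomp Require Import all_boot.
Set Implicit Arguments. Unset Strict Implicit. Unset Printing Implicit Defensive.

Definition is_perm (s : seq nat) : Prop := perm_eq s (iota 0 (size s)).

Definition order_iso (s t : seq nat) : Prop :=
  size s = size t /\
  forall i j, i < size s -> j < size s ->
    (nth 0 s i < nth 0 s j) = (nth 0 t i < nth 0 t j).

Definition contains (sigma pi : seq nat) : Prop :=
  exists m : bitseq, size m = size pi /\ order_iso (mask m pi) sigma.

Definition property := seq nat -> Prop.

Definition Av (delta : seq nat) : property :=
  fun pi => is_perm pi /\ ~ contains delta pi.

Definition infl_offset (sigma : seq nat) (alphas : seq (seq nat)) (i : nat) : nat :=
  sumn [seq size (nth [::] alphas j) |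
         j <- iota 0 (size sigma) & nth 0 sigma j < nth 0 sigma i].

(* the inflation sigma[alpha_1, ..., alpha_m] (blocks indexed from 0) *)
Definition inflate (sigma : seq nat) (alphas : seq (seq nat)) : seq nat :=
  flatten [seq [seq x + infl_offset sigma alphas i | x <- nth [::] alphas i]
          | i <- iota 0 (size sigma)].

(* A set F of properties is query-complete: for every sigma in S_m and P in F,
   membership of sigma[alpha_1..alpha_m] in P is determined by sigma and the
   answers "alpha_i \in Q" for all i and all Q in F. *)
Definition query_complete (F : property -> Prop) : Prop :=
  forall (m : nat) (sigma : seq nat) (alphas alphas' : seq (seq nat)),
    is_perm sigma -> size sigma = m ->
    size alphas = m -> size alphas' = m ->
    (forall i, i < m -> is_perm (nth [::] alphas i) /\ 0 < size (nth [::] alphas i)) ->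
    (forall i, i < m -> is_perm (nth [::] alphas' i) /\ 0 < size (nth [::] alphas' i)) ->
    (forall i, i < m -> forall Q, F Q ->
        (Q (nth [::] alphas i) <-> Q (nth [::] alphas' i))) ->
    forall P, F P -> (P (inflate sigma alphas) <-> P (inflate sigma alphas')).

Definition Av_below (beta : seq nat) : property -> Prop :=
  fun P => exists delta, is_perm delta /\ contains delta beta /\ P = Av delta.

(* Main.v *)
Require Import Defs.
From mathcomp Require Import all_boot.
From Stdlib Require Import Classical.
Set Implicit Arguments. Unset Strict Implicit. Unset Printing Implicit Defensive.


Lemma order_isoZ a b : order_iso a b <->
  size a = size b /\ forall p q, p \in zip a b -> q \in zip a b -> (p.1 < q.1) = (p.2 < q.2).
Proof.
split.
- move=> [Hs H]; split=>// p q /(nthP (0,0)) [i Hi <-] /(nthP (0,0)) [j Hj <-].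
  rewrite size_zip Hs minnn in Hi Hj.
  by rewrite !nth_zip //; apply H; rewrite Hs.
- move=> [Hs H]; split=>// i j Hi Hj.
  have Hz: size (zip a b) = size a by rewrite size_zip Hs minnn.
  rewrite -Hz in Hi Hj.
  have := H _ _ (mem_nth (0,0) Hi) (mem_nth (0,0) Hj).
  by rewrite !nth_zip.
Qed.

Lemma iso_refl a : order_iso a a.
Proof. by split. Qed.

Lemma iso_sym a b : order_iso a b -> order_iso b a.
Proof. move=> [Hs H]; split=>// i j Hi Hj; rewrite -Hs in Hi Hj; by rewrite H. Qed.

Lemma iso_trans a b c : order_iso a b -> order_iso b c -> order_iso a c.
Proof.
move=> [Hs H] [Hs' H']; split; first by rewrite Hs.
move=> i j Hi Hj; rewrite H // H' // -Hs //.
Qed.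

Lemma mask_zip (A B : Type) (m : bitseq) (a : seq A) (b : seq B) :
  size a = size b -> zip (mask m a) (mask m b) = mask m (zip a b).
Proof.
elim: a m b => [|x a IH] [|c m] [|y b] //= [Hs].
case: c => /=; by rewrite IH.
Qed.

Lemma size_mask_eq (A B : Type) (m : bitseq) (a : seq A) (b : seq B) :
  size a = size b -> size (mask m a) = size (mask m b).
Proof.
elim: a m b => [|x a IH] [|c m] [|y b] //= [Hs].
case: c => /=; by rewrite (IH _ b).
Qed.

Lemma iso_mask m a b : order_iso a b -> order_iso (mask m a) (mask m b).
Proof.
move=> /order_isoZ [Hs H]; apply/order_isoZ; split.
  exact: size_mask_eq.
move=> p q; rewrite mask_zip // => /mem_mask Hp /mem_mask Hq; exact: H.
Qed.

Lemma transport a b c : subseq a b -> order_iso b c ->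
  exists a', subseq a' c /\ order_iso a a'.
Proof.
move=> /subseqP [m Hm ->] Hbc; exists (mask m c); split.
  exact: mask_subseq.
exact: iso_mask.
Qed.

Definition contains' (d p : seq nat) := exists u, subseq u p /\ order_iso u d.

Lemma containsE d p : contains d p <-> contains' d p.
Proof.
split.
- move=> [m [Hm Hi]]; exists (mask m p); split=>//; exact: mask_subseq.
- move=> [u [/subseqP [m Hm ->] Hi]]; by exists m.
Qed.

Lemma contains'_trans g d b : contains' g d -> contains' d b -> contains' g b.
Proof.
move=> [u [Hu Hug]] [v [Hv Hvd]].
have [u' [Hu' Hi]] := transport Hu (iso_sym Hvd).
exists u'; split; first exact: subseq_trans Hv.
exact: iso_trans (iso_sym Hi) Hug.
Qed.

Lemma contains'_iso g g' p : order_iso g g' -> contains' g p -> contains' g' p.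
Proof. move=> H [u [Hu Hi]]; exists u; split=>//; exact: iso_trans H. Qed.

Lemma iso_shift t c : order_iso [seq x + c | x <- t] t.
Proof.
split; first by rewrite size_map.
move=> i j; rewrite size_map => Hi Hj; by rewrite !(nth_map 0) // ltn_add2r.
Qed.

Lemma perm_of_uniq_bound s : uniq s -> all (fun x => x < size s) s -> is_perm s.
Proof.
move=> Hu /allP Ha; rewrite /is_perm.
have Hsub : {subset s <= iota 0 (size s)}.
  by move=> x Hx; rewrite mem_iota add0n Ha.
have Hle : size (iota 0 (size s)) <= size s by rewrite size_iota.
have [_ Heq] := uniq_min_size Hu Hsub Hle.
apply: uniq_perm => //; exact: iota_uniq.
Qed.

Lemma perm_uniq' s : is_perm s -> uniq s.
Proof. by move=> H; rewrite (perm_uniq H) iota_uniq. Qed.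

Lemma perm_lt s x : is_perm s -> x \in s -> x < size s.
Proof. by move=> H; rewrite (perm_mem H) mem_iota add0n. Qed.

Definition std (t : seq nat) := [seq count (fun y => y < x) t | x <- t].

Lemma std_lt t x y : x \in t -> (x < y) = (count (fun z => z < x) t < count (fun z => z < y) t).
Proof.
move=> Hx; case: (ltnP x y) => Hxy.
- have H1 : count (fun z => z < x) t + count (pred1 x) t <= count (fun z => z < y) t.
    rewrite -count_predUI.
    have -> : count (predI (fun z => z < x) (pred1 x)) t = 0.
      by apply/eqP; rewrite -leqn0 leqNgt -has_count; apply/hasP => -[z _ /= /andP [H /eqP E]]; rewrite E ltnn in H.
    rewrite addn0; apply: sub_count => z /= /orP [H|/eqP ->] //; exact: ltn_trans H Hxy.
  have H2 : 0 < count (pred1 x) t.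
    rewrite -has_count; apply/hasP; exists x => //; exact: eqxx.
  symmetry; apply/idP; apply: leq_trans H1; by rewrite -addn1 leq_add2l.
- symmetry; apply/negbTE; rewrite -leqNgt; apply: sub_count => z /= H; exact: leq_trans H Hxy.
Qed.

Lemma std_iso t : order_iso t (std t).
Proof.
split; first by rewrite size_map.
move=> i j Hi Hj; rewrite !(nth_map 0) //; apply: std_lt; exact: mem_nth.
Qed.

Lemma std_perm t : uniq t -> is_perm (std t).
Proof.
move=> Hu; apply: perm_of_uniq_bound.
- rewrite map_inj_in_uniq // => x y Hx Hy E.
  case: (ltngtP x y) => // H.
  + by rewrite (std_lt y Hx) E ltnn in H.
  + by rewrite (std_lt x Hy) E ltnn in H.
- apply/allP => c /mapP [x Hx ->]; rewrite size_map.
  have H1 : count (fun z => z < x) t + count (pred1 x) t <= size t.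
    rewrite -count_predUI.
    have -> : count (predI (fun z => z < x) (pred1 x)) t = 0.
      by apply/eqP; rewrite -leqn0 leqNgt -has_count; apply/hasP => -[z _ /= /andP [H /eqP E]]; rewrite E ltnn in H.
    rewrite addn0; exact: count_size.
  have H2 : 0 < count (pred1 x) t.
    rewrite -has_count; apply/hasP; exists x => //; exact: eqxx.
  apply: leq_trans H1; by rewrite -addn1 leq_add2l.
Qed.

Lemma fin_choice (T : Type) (R : nat -> T -> Prop) (d : T) m :
  (forall i, i < m -> exists y, R i y) -> exists f : nat -> T, forall i, i < m -> R i (f i).
Proof.
elim: m => [|m IH] H; first by exists (fun _ => d).
have [f Hf] : exists f : nat -> T, forall i, i < m -> R i (f i).
  apply: IH => i Hi; apply: H; exact: ltnW.
have [y Hy] := H m (ltnSn m).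
exists (fun i => if i == m then y else f i) => i; rewrite ltnS leq_eqVlt.
case: eqP => [-> //|_ /= Hi]; exact: Hf.
Qed.

Definition L a n (al : nat -> seq nat) : seq (nat * nat) :=
  flatten [seq [seq (i, x) | x <- al i] | i <- iota a n].

Lemma L_cons a n al : L a n.+1 al = [seq (a, x) | x <- al a] ++ L a.+1 n al.
Proof. by []. Qed.

Lemma memL a n al p : p \in L a n al -> a <= p.1 < a + n /\ p.2 \in al p.1.
Proof.
move=> /flattenP [s /mapP [i Hi ->] /mapP [x Hx ->]] /=.
by rewrite mem_iota in Hi.
Qed.

Lemma subseq_catP (T : eqType) (s x y : seq T) : subseq s (x ++ y) ->
  exists s1 s2, s = s1 ++ s2 /\ subseq s1 x /\ subseq s2 y.
Proof.
move=> /subseqP [m Hm ->].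
have Hs : size (take (size x) m) = size x by rewrite size_takel // Hm size_cat leq_addr.
exists (mask (take (size x) m) x), (mask (drop (size x) m) y).
by rewrite -mask_cat // cat_take_drop !mask_subseq.
Qed.

Lemma subseq_mapP (T U : eqType) (f : T -> U) (s : seq U) (u : seq T) :
  subseq s [seq f x | x <- u] -> exists t, subseq t u /\ s = [seq f x | x <- t].
Proof.
move=> /subseqP [m Hm ->]; exists (mask m u); by rewrite mask_subseq map_mask.
Qed.

Lemma subseqL_decomp n a al s : subseq s (L a n al) ->
  exists t, (forall i, a <= i < a + n -> subseq (t i) (al i)) /\ s = L a n t.
Proof.
elim: n a s => [|n IH] a s.
  rewrite /L /=; case: s => // _; exists al; split => // i _.
rewrite L_cons => /subseq_catP [s1 [s2 [-> [H1 H2]]]].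
have [t0 [Ht0 ->]] := subseq_mapP H1.
have [t [Ht ->]] := IH _ _ H2.
exists (fun i => if i == a then t0 else t i); split.
  move=> i /andP [Hai Hi]; case: eqP => [-> //|/eqP Hne].
  apply: Ht; rewrite addSnnS Hi andbT ltn_neqAle Hai eq_sym Hne //.
rewrite L_cons eqxx; congr (_ ++ _); rewrite /L; congr flatten.
apply/eq_in_map => i; rewrite mem_iota => /andP [Hi _].
by rewrite (gtn_eqF Hi).
Qed.

Lemma L_subseq n a t t' : (forall i, a <= i < a + n -> subseq (t i) (t' i)) ->
  subseq (L a n t) (L a n t').
Proof.
elim: n a => [|n IH] a H; first by [].
rewrite !L_cons; apply: cat_subseq.
  apply: map_subseq; apply: H; by rewrite leqnn addnS ltnS leq_addr.
apply: IH => i /andP [H1 H2]; apply: H.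
by rewrite (ltnW H1) addnS -addSn.
Qed.

Lemma size_L_eq n a t t' : (forall i, a <= i < a + n -> size (t i) = size (t' i)) ->
  size (L a n t) = size (L a n t').
Proof.
elim: n a => [|n IH] a H; first by [].
rewrite !L_cons !size_cat !size_map H; last by rewrite leqnn addnS ltnS leq_addr.
congr (_ + _); apply: IH => i /andP [H1 H2]; apply: H.
by rewrite (ltnW H1) addnS -addSn.
Qed.

Lemma zip_mapLR (A B C D : Type) (f : A -> C) (g : B -> D) u v :
  zip [seq f x | x <- u] [seq g y | y <- v] = [seq (f p.1, g p.2) | p <- zip u v].
Proof. elim: u v => [|x u IH] [|y v] //=; by rewrite IH. Qed.

Lemma mem_zip' (A B : eqType) (p : A * B) u v : p \in zip u v -> p.1 \in u /\ p.2 \in v.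
Proof.
elim: u v => [|x u IH] [|y v] //=; rewrite in_cons => /orP [/eqP -> | /IH [H1 H2]] /=.
  by rewrite !in_cons !eqxx.
by rewrite !in_cons H1 H2 !orbT.
Qed.

Lemma memZL n a t t' pq : (forall i, a <= i < a + n -> size (t i) = size (t' i)) ->
  pq \in zip (L a n t) (L a n t') ->
  exists i, a <= i < a + n /\ pq.1.1 = i /\ pq.2.1 = i /\ (pq.1.2, pq.2.2) \in zip (t i) (t' i).
Proof.
elim: n a => [|n IH] a H; first by [].
have Ha : a <= a < a + n.+1 by rewrite leqnn addnS ltnS leq_addr.
rewrite !L_cons zip_cat ?size_map ?H // mem_cat => /orP [].
  rewrite zip_mapLR => /mapP [[x y] Hxy ->] /=; exists a; by [].
move=> /IH [|i [Hi Hrest]].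
  move=> i /andP [H1 H2]; apply: H; by rewrite (ltnW H1) addnS -addSn.
exists i; split=> //; move: Hi => /andP [H1 H2]; by rewrite (ltnW H1) addnS -addSn.
Qed.

Lemma uniqL n a al : (forall i, a <= i < a + n -> uniq (al i)) -> uniq (L a n al).
Proof.
elim: n a => [|n IH] a H; first by [].
have Ha : a <= a < a + n.+1 by rewrite leqnn addnS ltnS leq_addr.
rewrite L_cons cat_uniq; apply/and3P; split.
- rewrite map_inj_uniq ?H // => x y []; done.
- apply/hasP => -[p /memL [/andP [Hp _] _] /mapP [x _ E]].
  by rewrite E ltnn in Hp.
- apply: IH => i /andP [H1 H2]; apply: H; by rewrite (ltnW H1) addnS -addSn.
Qed.

Lemma size_L n a al : size (L a n al) = \sum_(i <- iota a n) size (al i).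
Proof.
elim: n a => [|n IH] a; first by rewrite big_nil.
by rewrite L_cons size_cat size_map IH /= big_cons.
Qed.

Definition fmap sigma alphas (p : nat * nat) := p.2 + infl_offset sigma alphas p.1.

Lemma inflateE sigma alphas :
  inflate sigma alphas = map (fmap sigma alphas) (L 0 (size sigma) (nth [::] alphas)).
Proof.
rewrite /inflate /L map_flatten -map_comp; congr flatten; apply/eq_map => i /=.
by rewrite -map_comp.
Qed.

Lemma offE sigma alphas i : infl_offset sigma alphas i =
  \sum_(j <- iota 0 (size sigma) | nth 0 sigma j < nth 0 sigma i) size (nth [::] alphas j).
Proof. by rewrite /infl_offset sumnE big_map big_filter. Qed.

Lemma sum_split (r : seq nat) (i : nat) (P Q : pred nat) (F : nat -> nat) :
  i \in r -> uniq r -> P i -> (forall k, Q k -> P k && (k != i)) ->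
  F i + \sum_(k <- r | Q k) F k <= \sum_(k <- r | P k) F k.
Proof.
move=> Hi Hu HPi HQ.
rewrite -[X in _ <= X]big_filter (bigD1_seq i) ?mem_filter ?HPi ?filter_uniq //=.
rewrite big_filter_cond leq_add2l big_mkcond [X in _ <= X]big_mkcond /=.
apply: leq_sum => k _; case HQk: (Q k) => //; by rewrite HQ.
Qed.

Lemma off_lt sigma alphas i j : i < size sigma ->
  nth 0 sigma i < nth 0 sigma j ->
  infl_offset sigma alphas i + size (nth [::] alphas i) <= infl_offset sigma alphas j.
Proof.
move=> Hi Hij; rewrite !offE addnC.
apply: (@sum_split (iota 0 (size sigma)) i (fun k => nth 0 sigma k < nth 0 sigma j) (fun k => nth 0 sigma k < nth 0 sigma i) (fun k => size (nth [::] alphas k))) => //.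
- by rewrite mem_iota.
- exact: iota_uniq.
- move=> k Hk; rewrite (ltn_trans Hk Hij) /=; apply/eqP => E; by rewrite E ltnn in Hk.
Qed.

Lemma off_bound sigma alphas i : i < size sigma ->
  infl_offset sigma alphas i + size (nth [::] alphas i) <=
  \sum_(k <- iota 0 (size sigma)) size (nth [::] alphas k).
Proof.
move=> Hi; rewrite !offE addnC.
apply: (@sum_split (iota 0 (size sigma)) i (fun _ => true) (fun k => nth 0 sigma k < nth 0 sigma i) (fun k => size (nth [::] alphas k))) => //.
- by rewrite mem_iota.
- exact: iota_uniq.
- move=> k Hk /=; apply/eqP => E; by rewrite E ltnn in Hk.
Qed.

Lemma cmpL sigma alphas p q : is_perm sigma ->
  (forall i, i < size sigma -> is_perm (nth [::] alphas i)) ->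
  p \in L 0 (size sigma) (nth [::] alphas) -> q \in L 0 (size sigma) (nth [::] alphas) ->
  (fmap sigma alphas p < fmap sigma alphas q) =
  if p.1 == q.1 then p.2 < q.2 else nth 0 sigma p.1 < nth 0 sigma q.1.
Proof.
move=> Hs HA; case: p => i x; case: q => j y.
move=> /memL [] /= Hi Hx /memL [] /= Hj Hy.
rewrite ?add0n in Hi Hj.
have Hx' := perm_lt (HA _ Hi) Hx; have Hy' := perm_lt (HA _ Hj) Hy.
rewrite /fmap /=; case: eqP => [-> | Hne]; first by rewrite ltn_add2r.
case: (ltngtP (nth 0 sigma i) (nth 0 sigma j)) => H.
- apply/idP; have := off_lt alphas Hi H => Ho.
  apply: (leq_trans _ (leq_addl y _)); apply: leq_trans Ho.
  by rewrite addnC ltn_add2l.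
- apply/negbTE; rewrite -leqNgt; have := off_lt alphas Hj H => Ho.
  apply: ltnW; apply: (leq_trans _ (leq_addl x _)); apply: leq_trans Ho.
  by rewrite addnC ltn_add2l.
- exfalso; apply: Hne; apply/eqP.
  by rewrite -(nth_uniq 0 Hi Hj (perm_uniq' Hs)) H.
Qed.

Lemma inflate_perm sigma alphas : is_perm sigma ->
  (forall i, i < size sigma -> is_perm (nth [::] alphas i)) ->
  is_perm (inflate sigma alphas).
Proof.
move=> Hs HA; rewrite inflateE; apply: perm_of_uniq_bound.
- rewrite map_inj_in_uniq.
    apply: uniqL => i /andP [_ Hi]; exact: perm_uniq' (HA _ Hi).
  move=> p q Hp Hq E.
  have := cmpL Hs HA Hp Hq; have := cmpL Hs HA Hq Hp.
  rewrite E ltnn eq_sym; case: p q Hp Hq {E} => i x [j y] Hp Hq /=.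
  move: Hp Hq => /memL [] /= Hi _ /memL [] /= Hj _.
  case: eqP => [-> | Hne] H1 H2.
    by case: (ltngtP x y) H1 H2 => // ->.
  exfalso; apply: Hne; apply/eqP.
  rewrite -(nth_uniq 0 Hi Hj (perm_uniq' Hs)).
  by case: (ltngtP (nth 0 sigma i) (nth 0 sigma j)) H1 H2.
- apply/allP => c /mapP [[i x] Hp ->]; rewrite size_map size_L.
  move: Hp => /memL [] /= Hi Hx; rewrite ?add0n in Hi.
  have Hx' := perm_lt (HA _ Hi) Hx.
  apply: leq_trans (off_bound alphas Hi).
  by rewrite /fmap /= addnC ltn_add2l.
Qed.

Lemma block_subseq n a t i : a <= i < a + n ->
  subseq [seq (i, x) | x <- t i] (L a n t).
Proof.
elim: n a => [|n IH] a; first by rewrite addn0; case: leqP => // /leq_ltn_trans H /H; rewrite ltnn.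
rewrite L_cons leq_eqVlt => /andP [/orP [/eqP <- _| H1 H2]].
  exact: prefix_subseq.
apply: subseq_trans (suffix_subseq _ _); apply: IH.
by rewrite H1 addSnnS.
Qed.

Lemma transfer sigma alphas alphas' beta d :
  is_perm sigma ->
  (forall i, i < size sigma -> is_perm (nth [::] alphas i) /\ is_perm (nth [::] alphas' i)) ->
  (forall i, i < size sigma -> forall g, is_perm g -> contains' g beta ->
      contains' g (nth [::] alphas i) -> contains' g (nth [::] alphas' i)) ->
  contains' d beta -> contains' d (inflate sigma alphas) ->
  contains' d (inflate sigma alphas').
Proof.
move=> Hs HA HQ Hdb [u [Hu Hud]].
have HA1 i : i < size sigma -> is_perm (nth [::] alphas i) by move=> /HA [].
have HA2 i : i < size sigma -> is_perm (nth [::] alphas' i) by move=> /HA [].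
rewrite inflateE in Hu; have [s [Hs1 Es]] := subseq_mapP Hu; subst u.
have [t [Ht Est]] := subseqL_decomp Hs1; subst s.
have Hex : forall i, i < size sigma -> exists t', subseq t' (nth [::] alphas' i) /\ order_iso t' (t i).
  move=> i Hi.
  have Hti : subseq (t i) (nth [::] alphas i) by apply: Ht.
  have Hun : uniq (t i) := subseq_uniq Hti (perm_uniq' (HA1 _ Hi)).
  have Hgd : contains' (std (t i)) d.
    have Hb : subseq [seq fmap sigma alphas p | p <- [seq (i, x) | x <- t i]]
                     [seq fmap sigma alphas p | p <- L 0 (size sigma) t].
      by apply: map_subseq; apply: block_subseq.
    have [w [Hw Hiso]] := transport Hb Hud.
    exists w; split => //.
    apply: iso_trans (iso_sym Hiso) _.
    rewrite -map_comp; apply: iso_trans (iso_shift _ (infl_offset sigma alphas i)) _.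
    exact: std_iso.
  have Hgb : contains' (std (t i)) beta := contains'_trans Hgd Hdb.
  have Hga : contains' (std (t i)) (nth [::] alphas i).
    exists (t i); split => //; exact: std_iso.
  have [t'' [Hsub Hiso]] := HQ i Hi _ (std_perm Hun) Hgb Hga.
  exists t''; split => //; exact: iso_trans Hiso (iso_sym (std_iso _)).
have [t' Ht'] := fin_choice [::] Hex.
exists [seq fmap sigma alphas' p | p <- L 0 (size sigma) t']; split.
  rewrite inflateE; apply: map_subseq; apply: L_subseq => i /andP [_ Hi].
  by case: (Ht' i Hi).
apply: iso_trans Hud.
have Hsz : forall i, 0 <= i < 0 + size sigma -> size (t' i) = size (t i).
  move=> i /andP [_ Hi]; by case: (Ht' i Hi) => _ [].
apply/order_isoZ; split; first by rewrite !size_map (size_L_eq Hsz).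
have HL' : {subset L 0 (size sigma) t' <= L 0 (size sigma) (nth [::] alphas')}.
  apply: mem_subseq; apply: L_subseq => i /andP [_ Hi]; by case: (Ht' i Hi).
have HL : {subset L 0 (size sigma) t <= L 0 (size sigma) (nth [::] alphas)}.
  apply: mem_subseq; apply: L_subseq => i /andP [_ Hi]; exact: Ht.
rewrite zip_mapLR => p q /mapP [pp Hpp ->] /mapP [qq Hqq ->] /=.
have [Hp1 Hp2] := mem_zip' Hpp; have [Hq1 Hq2] := mem_zip' Hqq.
rewrite (cmpL Hs HA2 (HL' _ Hp1) (HL' _ Hq1)) (cmpL Hs HA1 (HL _ Hp2) (HL _ Hq2)).
have [i [Hi [E1 [E2 Hzp]]]] := memZL Hsz Hpp.
have [j [Hj [F1 [F2 Hzq]]]] := memZL Hsz Hqq.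
rewrite E1 E2 F1 F2; case: eqP => [Eij | _] //.
rewrite -Eij in Hzq; move: Hi => /andP [_ Hi].
have [_ Hiso] := proj1 (order_isoZ _ _) (proj2 (Ht' i Hi)).
by have := Hiso _ _ Hzp Hzq.
Qed.

Theorem lemma4p1 (beta : seq nat) : is_perm beta -> query_complete (Av_below beta).
Proof.
move=> Hb m sigma alphas alphas' Hs Hm Ha Ha' HA HA' HQ P [d [Hd [Hdb ->]]].
subst m.
have HB i : i < size sigma -> is_perm (nth [::] alphas i) /\ is_perm (nth [::] alphas' i).
  by move=> Hi; split; [case: (HA i Hi) | case: (HA' i Hi)].
have HB' i : i < size sigma -> is_perm (nth [::] alphas' i) /\ is_perm (nth [::] alphas i).
  by move=> /HB [].
have HQ1 i : i < size sigma -> forall g, is_perm g -> contains' g beta ->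
      contains' g (nth [::] alphas i) -> contains' g (nth [::] alphas' i).
  move=> Hi g Hg Hgb Hga; apply: NNPP => Hn.
  have HAv : Av_below beta (Av g) by exists g; split => //; split => //; apply/containsE.
  have [_ H2] := HQ i Hi _ HAv.
  have : Av g (nth [::] alphas i).
    apply: H2; split; [by case: (HB' i Hi)|].
    by move=> /containsE.
  by move=> [_ /(_ (proj2 (containsE _ _) Hga))].
have HQ2 i : i < size sigma -> forall g, is_perm g -> contains' g beta ->
      contains' g (nth [::] alphas' i) -> contains' g (nth [::] alphas i).
  move=> Hi g Hg Hgb Hga; apply: NNPP => Hn.
  have HAv : Av_below beta (Av g) by exists g; split => //; split => //; apply/containsE.
  have [H1 _] := HQ i Hi _ HAv.
  have : Av g (nth [::] alphas' i).
    apply: H1; split; [by case: (HB i Hi)|].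
    by move=> /containsE.
  by move=> [_ /(_ (proj2 (containsE _ _) Hga))].
have Hdb' : contains' d beta by apply/containsE.
split => -[_ Hn]; split.
- apply: inflate_perm => // i Hi; by case: (HB i Hi).
- move=> /containsE H; apply: Hn; apply/containsE; exact: transfer Hs HB' HQ2 Hdb' H.
- apply: inflate_perm => // i Hi; by case: (HB i Hi).
- move=> /containsE H; apply: Hn; apply/containsE; exact: transfer Hs HB HQ1 Hdb' H.
Qed.
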